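(* Consider a two-asset G3M with fee parameter $\gamma\in(0,1)$ and a continuous reference price process $(S_t)_{t\ge0}$, $S_t>0$, with initial pool price $P_0$ satisfying $\gamma P_0\le S_0\le\gamma^{-1}P_0$. Assume there are no noise traders, the reference market is frictionless with infinite liquidity, and arbitrageurs continuously monitor and immediately act on arbitrage opportunities (so the pool price is moved only by arbitrage trades keeping it within the no-arbitrage band $[\gamma S_t,\gamma^{-1}S_t]$). Write $\ln P_t=\ln P_0+U_t-L_t$, where $L_t$ (resp. $U_t$) is the cumulative decrease (resp. increase) of the log pool price caused by arbitrage trades selling $X$ to (resp. buying $X$ from) the pool. Then, with $Z_t=\ln(S_t/P_t)$: (a) $Z_t=\ln S_t-\ln P_0+L_t-U_t$ and $Z_t\in[\ln\gamma,-\ln\gamma]$ for all $t\ge0$; (b) $L_t$ and $U_t$ are non-decreasing and continuous with $L_0=U_0=0$; (c) $L_t$ increases only when $Z_t=\ln\gamma$ and $U_t$ increases only when $Z_t=-\ln\gamma$. Furthermore, $$L_t=\sup_{0\le s\le t}\big(-\ln(\gamma P_0)+\ln S_s-U_s\big)^-,\qquad U_t=\sup_{0\le s\le t}\big(\ln(\gamma^{-1}P_0)-\ln S_s-L_s\big)^-,$$ where $(a)^-=\max\{-a,0\}$.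
   Context: $P_t$ is the G3M pool price of asset $X$ in units of $Y$ and $S_t$ the reference-market price. A process ''increases only when $Z_t=a$'' means that every point of increase of the process is a time $t$ with $Z_t=a$. *)

(* Defs.v *)
From HB Require Import structures.
From mathcomp Require Import all_boot all_order all_algebra.
From mathcomp Require Import all_classical all_reals all_analysis.
Set Implicit Arguments. Unset Strict Implicit. Unset Printing Implicit Defensive.
Import Order.TTheory GRing.Theory Num.Theory.
Import numFieldNormedType.Exports.
Local Open Scope classical_set_scope.
Local Open Scope ring_scope.

Definition negpart {R : realType} (a : R) : R := Num.max (- a) 0.

Definition time_dom {R : realType} : set R := [set t | 0 <= t].

Definition nondecr_time {R : realType} (f : R -> R) : Prop :=
  forall s t, 0 <= s -> s <= t -> f s <= f t.

Definition point_of_increase {R : realType} (f : R -> R) (t : R) : Prop :=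
  0 <= t /\ forall e : R, 0 < e -> f (Num.max 0 (t - e)) < f (t + e).

Definition increases_only_when {R : realType} (f : R -> R) (A : R -> Prop) : Prop :=
  forall t, point_of_increase f t -> A t.

(* f is right-continuous at every time t >= 0 (cadlag convention for
   cumulative processes: f t includes the trades made at time t) *)
Definition right_cont_time {R : realType} (f : R -> R) : Prop :=
  forall t : R, 0 <= t -> f x @[x --> t^'+] --> f t.

(* Main.v *)
Require Import Defs.
From HB Require Import structures.
From mathcomp Require Import all_boot all_order all_algebra.
From mathcomp Require Import all_classical all_reals all_analysis.
From mathcomp Require Import ring lra.
Import Order.TTheory GRing.Theory Num.Theory.
Import numFieldNormedType.Exports.
Local Open Scope classical_set_scope.
Local Open Scope ring_scope.

Set Implicit Arguments. Unset Strict Implicit. Unset Printing Implicit Defensive.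

Lemma within_eps {R : realType} (f : R -> R) :
  (forall t, 0 <= t -> forall e, 0 < e -> exists2 d, 0 < d &
     forall y, 0 <= y -> `|t - y| < d -> `|f t - f y| < e) ->
  {within time_dom, continuous f}.
Proof.
move=> H; apply/subspace_continuousP => t t0; apply/cvgrPdist_lt => e e0.
have [d d0 Hd] := H t t0 e e0.
rewrite /within /=; apply/nbhs_ballP; exists d => //= y /= hy ty.
rewrite -ball_normE /= in hy.
exact: Hd.
Qed.

Lemma eps_within {R : realType} (f : R -> R) : {within time_dom, continuous f} ->
  (forall t, 0 <= t -> forall e, 0 < e -> exists2 d, 0 < d &
     forall y, 0 <= y -> `|t - y| < d -> `|f t - f y| < e).
Proof.
move=> /subspace_continuousP H t t0 e e0.
have := H t t0; move/cvgrPdist_lt => /(_ e e0).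
rewrite /within /= => /nbhs_ballP [d d0 Hd]; exists d => // y y0 ty.
apply: Hd => //; rewrite -ball_normE //.
Qed.

Lemma rc_eps {R : realType} (f : R -> R) t : f x @[x --> t^'+] --> f t ->
  forall e, 0 < e -> exists2 d, 0 < d &
     forall y, t < y -> y - t < d -> `|f t - f y| < e.
Proof.
move=> H e e0; move/cvgrPdist_lt: H => /(_ e e0).
rewrite /within /= => /nbhs_ballP [d d0 Hd]; exists d => // y ty yd.
apply: Hd => //; rewrite -ball_normE /= ltr0_norm ?subr_lt0 // opprB //.
Qed.

Lemma hit {R : realType} (f : R -> R) s t : nondecr_time f -> right_cont_time f ->
  0 <= s -> s <= t -> f s < f t ->
  exists tau, [/\ s < tau, tau <= t, f tau = f t & point_of_increase f tau].
Proof.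
move=> hm hrc s0 st fst.
set A := [set r | s <= r <= t /\ f t <= f r].
have At : A t by split => //; rewrite st lexx.
have lbA : lbound A s by move=> r [/andP[]].
have hinf : has_inf A by split; [exists t | exists s].
set tau := inf A.
have stau : s <= tau by apply: lb_le_inf => //; exists t.
have taut : tau <= t by apply: (ge_inf (proj2 hinf)).
have tau0 : 0 <= tau by apply: le_trans stau.
have ftau : f t <= f tau.
  rewrite leNgt; apply/negP => lt.
  have ftd : 0 < f t - f tau by rewrite subr_gt0.
  have [d d0 Hd] := @rc_eps R f tau (hrc tau tau0) _ ftd.
  have [r Ar rlt] := inf_adherent d0 hinf.
  have taur : tau <= r by apply: (ge_inf (proj2 hinf)).
  move: taur; rewrite le_eqVlt => /orP[/eqP er|ltr].
    by move: Ar => [_]; rewrite -er leNgt lt.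
  have H1 : r - tau < d by lra.
  have := Hd r ltr H1; rewrite ltr_norml => /andP[H2 _].
  case: Ar => _ Ar; lra.
have eq : f tau = f t by apply/le_anti; rewrite ftau hm.
have stau' : s < tau.
  rewrite lt_neqAle stau andbT; apply/eqP => est.
  by move: fst; rewrite est eq ltxx.
exists tau; split => //; split => // e e0.
apply: (@lt_le_trans _ _ (f t)); last by rewrite -eq hm // lerDl ltW.
set m := Num.max 0 (tau - e).
have m0 : 0 <= m by rewrite le_max lexx.
have mtau : m < tau by rewrite gt_max; apply/andP; split; lra.
have [ms|sm] := leP m s; first by apply: le_lt_trans fst; apply: hm.
rewrite ltNge; apply/negP => ftm.
have Am : A m by split => //; rewrite (ltW sm) /= (le_trans (ltW mtau)).
have := ge_inf (proj2 hinf) Am; rewrite -/tau leNgt mtau //.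
Qed.

Lemma skor {R : realType} (f h : R -> R) t : nondecr_time f -> right_cont_time f -> f 0 = 0 ->
  (forall s, 0 <= s -> 0 <= h s /\ h s <= f s) ->
  (forall s, point_of_increase f s -> h s = f s) -> 0 <= t ->
  f t = sup [set h s | s in [set s | 0 <= s <= t]].
Proof.
move=> hm hrc f0 hh hpoi t0.
have [s /andP[s0 st] hs] : exists2 s, 0 <= s <= t & h s = f t.
  have [lt|ge] := ltP (f 0) (f t).
    have [tau [? ? ? ?]] := hit hm hrc (lexx 0) t0 lt.
    by exists tau; [rewrite ltW | rewrite hpoi].
  exists 0; first by rewrite lexx.
  have ft : f t = 0 by apply/le_anti; rewrite -{1}f0 ge -f0 hm.
  rewrite ft; have [] := hh 0 (lexx 0); rewrite f0 => H1 H2; apply/le_anti/andP; split => //.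
have ub : ubound [set h s | s in [set s | 0 <= s <= t]] (f t).
  move=> _ [r /andP[r0 rt] <-]; have [_ ?] := hh r r0.
  by apply: le_trans (hm _ _ r0 rt).
apply/le_anti/andP; split.
  apply: (ub_le_sup (ex_intro _ (f t) ub)); exists s => //; by rewrite /= s0 st.
by apply: (ge_sup _ ub); exists (f t); exists s => //; by rewrite /= s0 st.
Qed.

Lemma cont_core {R : realType} (a f g : R -> R) c : c < 0 ->
  (forall t, 0 <= t -> forall e, 0 < e -> exists2 d, 0 < d &
     forall y, 0 <= y -> `|t - y| < d -> `|a t - a y| < e) ->
  nondecr_time f -> nondecr_time g -> right_cont_time f -> right_cont_time g ->
  (forall t, 0 <= t -> c <= a t + f t - g t) ->
  (forall t, point_of_increase f t -> a t + f t - g t = c) ->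
  (forall t, point_of_increase g t -> a t + f t - g t = - c) ->
  forall t, 0 <= t -> forall e, 0 < e -> exists2 d, 0 < d &
     forall y, 0 <= y -> `|t - y| < d -> `|f t - f y| < e.
Proof.
move=> c0 ha hfm hgm hfrc hgrc hZ hpf hpg t t0 e e0.
set eta := Num.min (e / 2) (- c).
have eta0 : 0 < eta by rewrite lt_min; apply/andP; split; lra.
have eta1 : eta <= e / 2 by rewrite ge_min lexx.
have eta2 : eta <= - c by rewrite ge_min lexx orbT.
have [d1 d10 Hd1] := ha t t0 eta eta0.
have [d2 d20 Hd2] := rc_eps (hfrc t t0) e0.
exists (Num.min d1 d2); first by rewrite lt_min d10 d20.
move=> y y0; rewrite lt_min => /andP[ty1 ty2].
have [yt|ty|->]:= ltgtP y t; last by rewrite subrr normr0.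
- have fyt : f y <= f t by apply: hfm => //; rewrite ltW.
  rewrite ger0_norm ?subr_ge0 //.
  have [lt|ge] := ltP (f y) (f t); last by lra.
  have ty1' : t - y < d1.
    by move: ty1; rewrite ger0_norm // subr_ge0 ltW.
  have near : forall r, y <= r -> r <= t -> a t - a r < eta /\ a r - a t < eta.
    move=> r yr rt; have r0 : 0 <= r by apply: le_trans yr.
    have : `|t - r| < d1.
      rewrite ger0_norm ?subr_ge0 //; lra.
    by move/(Hd1 r r0); rewrite ltr_norml => /andP[]; split; lra.
  have [tau [ytau taut ftau ptau]] := hit hfm hfrc y0 (ltW yt) lt.
  have Ztau := hpf tau ptau.
  have [nt1 nt2] := near tau (ltW ytau) taut.
  have gyt : g y = g tau.
    apply/le_anti/andP; split; first by apply: hgm => //; rewrite ltW.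
    rewrite leNgt; apply/negP => glt.
    have [sig [ysig sigtau gsig psig]] := hit hgm hgrc y0 (ltW ytau) glt.
    have Zsig := hpg sig psig.
    have [ns1 ns2] := near sig (ltW ysig) (le_trans sigtau taut).
    have fst : f sig <= f tau by apply: hfm => //; apply: le_trans (ltW ysig).
    lra.
  have Zy := hZ y y0.
  have [ny1 ny2] := near y (lexx y) (ltW yt).
  lra.
- by apply: Hd2 => //; move: ty2; rewrite ltr0_norm ?subr_lt0 // opprB.
Qed.

Theorem mainTheorem2 (R : realType) (gamma P0 : R) (S P L U : R -> R)
  (* fee parameter *)
  (hgamma0 : 0 < gamma) (hgamma1 : gamma < 1)
  (* continuous positive reference price on [0,+oo) *)
  (hSpos : forall t, 0 <= t -> 0 < S t)
  (hScont : {within time_dom, continuous S})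
  (* initial pool price, inside the no-arbitrage band *)
  (hP0pos : 0 < P0) (hP0 : P 0 = P0)
  (hband0 : gamma * P0 <= S 0 /\ S 0 <= gamma^-1 * P0)
  (* pool price and its decomposition into cumulative arbitrage pushes *)
  (hPpos : forall t, 0 <= t -> 0 < P t)
  (hlnP : forall t, 0 <= t -> ln (P t) = ln P0 + U t - L t)
  (hLmono : nondecr_time L) (hUmono : nondecr_time U)
  (hL0 : L 0 = 0) (hU0 : U 0 = 0)
  (* cumulative processes are right-continuous (cadlag convention) *)
  (hLrc : right_cont_time L) (hUrc : right_cont_time U)
  (* arbitrageurs immediately act: pool price stays in the no-arbitrage band *)
  (hband : forall t, 0 <= t -> gamma * S t <= P t /\ P t <= gamma^-1 * S t)
  (* arbitrage trades only occur when there is an arbitrage opportunity: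
     X is sold to the pool only when P_t >= S_t / gamma,
     X is bought from the pool only when P_t <= gamma * S_t *)
  (hLarb : increases_only_when L (fun t => gamma^-1 * S t <= P t))
  (hUarb : increases_only_when U (fun t => P t <= gamma * S t)) :
  let Z := fun t => ln (S t / P t) in
  (* (a) *)
  (forall t, 0 <= t ->
     Z t = ln (S t) - ln P0 + L t - U t /\ ln gamma <= Z t /\ Z t <= - ln gamma) /\
  (* (b) *)
  (nondecr_time L /\ nondecr_time U /\
   {within time_dom, continuous L} /\ {within time_dom, continuous U} /\
   L 0 = 0 /\ U 0 = 0) /\
  (* (c) *)
  (increases_only_when L (fun t => Z t = ln gamma) /\
   increases_only_when U (fun t => Z t = - ln gamma)) /\
  (* Skorokhod-type representation *)
  (forall t, 0 <= t ->
     L t = sup [set negpart (- ln (gamma * P0) + ln (S s) - U s) | s in [set s | 0 <= s <= t]] /\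
     U t = sup [set negpart (ln (gamma^-1 * P0) - ln (S s) - L s) | s in [set s | 0 <= s <= t]]).
Proof.
move=> Z.
have c0 : ln gamma < 0 by apply: ln_lt0; rewrite hgamma0 hgamma1.
set c := ln gamma.
set a := fun t => ln (S t) - ln P0.
have hZ : forall t, 0 <= t -> Z t = a t + L t - U t.
  move=> t t0; rewrite /Z /a lnM ?lnV ?posrE ?invr_gt0 ?hSpos ?hPpos // hlnP //; ring.
have hlnband : forall t, 0 <= t ->
    c + ln (S t) <= ln (P t) /\ ln (P t) <= - c + ln (S t).
  move=> t t0; have [h1 h2] := hband t t0; split.
    by rewrite -lnM ?posrE ?hSpos // ler_ln ?posrE ?mulr_gt0 ?hSpos ?hPpos.
  by rewrite /c -lnV ?posrE // -lnM ?posrE ?invr_gt0 ?hSpos // ler_ln ?posrE ?mulr_gt0 ?invr_gt0 ?hSpos ?hPpos.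
have hb : forall t, 0 <= t -> c <= a t + L t - U t /\ a t + L t - U t <= - c.
  move=> t t0; have [h1 h2] := hlnband t t0; have := hlnP t t0; rewrite /a; lra.
have hpL : forall t, point_of_increase L t -> a t + L t - U t = c.
  move=> t pt; have t0 := pt.1; have h := hLarb t pt.
  have h' : - c + ln (S t) <= ln (P t).
    by rewrite /c -lnV ?posrE // -lnM ?posrE ?invr_gt0 ?hSpos // ler_ln ?posrE ?mulr_gt0 ?invr_gt0 ?hSpos ?hPpos.
  have [h1 h2] := hlnband t t0; have := hlnP t t0; rewrite /a; lra.
have hpU : forall t, point_of_increase U t -> a t + L t - U t = - c.
  move=> t pt; have t0 := pt.1; have h := hUarb t pt.
  have h' : ln (P t) <= c + ln (S t).
    by rewrite -lnM ?posrE ?hSpos // ler_ln ?posrE ?mulr_gt0 ?hSpos ?hPpos.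
  have [h1 h2] := hlnband t t0; have := hlnP t t0; rewrite /a; lra.
have hlnS : {within time_dom, continuous ((@ln R) \o S)}.
  apply: within_continuous_comp => // x /set_mem [y y0 <-].
  by apply: continuous_ln; apply: hSpos.
have haeps : forall t, 0 <= t -> forall e, 0 < e -> exists2 d, 0 < d &
     forall y, 0 <= y -> `|t - y| < d -> `|a t - a y| < e.
  move=> t t0 e e0; have [d d0 Hd] := eps_within hlnS t0 e0.
  exists d => // y y0 ty; have := Hd y y0 ty.
  by rewrite (_ : a t - a y = ln (S t) - ln (S y)) //= /a; ring.
have haeps' : forall t, 0 <= t -> forall e, 0 < e -> exists2 d, 0 < d &
     forall y, 0 <= y -> `|t - y| < d -> `|(fun s => - a s) t - (fun s => - a s) y| < e.
  move=> t t0 e e0; have [d d0 Hd] := haeps t t0 e e0.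
  exists d => // y y0 ty; have := Hd y y0 ty.
  by rewrite (_ : - a t - - a y = - (a t - a y)) ?normrN //; ring.
have lg : ln (gamma * P0) = c + ln P0 by rewrite lnM ?posrE.
have lgi : ln (gamma^-1 * P0) = - c + ln P0.
  by rewrite lnM ?posrE ?invr_gt0 // lnV ?posrE.
have L0 : forall s, 0 <= s -> 0 <= L s by move=> s s0; rewrite -hL0 hLmono.
have U0 : forall s, 0 <= s -> 0 <= U s by move=> s s0; rewrite -hU0 hUmono.
split.
  move=> t t0; rewrite hZ //; have [h1 h2] := hb t t0; split => //.
split.
  split => //; split => //; split.
    apply: within_eps.
    apply: (cont_core c0 haeps hLmono hUmono hLrc hUrc) => //.
    by move=> t t0; have [] := hb t t0.
  split => //.
  apply: within_eps.
  apply: (cont_core c0 haeps' hUmono hLmono hUrc hLrc).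
  - by move=> t t0 /=; have [] := hb t t0; rewrite /c; lra.
  - by move=> t pt /=; have := hpU t pt; rewrite /c; lra.
  - by move=> t pt /=; have := hpL t pt; rewrite /c; lra.
split.
  split.
    by move=> t pt; rewrite hZ ?(pt.1) // hpL.
  by move=> t pt; rewrite hZ ?(pt.1) // hpU.
move=> t t0; split.
  apply: (skor hLmono hLrc hL0 _ _ t0).
    move=> s s0; have [h1 h2] := hb s s0; rewrite /negpart lg; split.
      by rewrite le_max lexx orbT.
    rewrite ge_max L0 // andbT; rewrite /a in h1; lra.
  move=> s ps; have := hpL s ps; rewrite /negpart lg /a => h.
  rewrite (_ : - (- (c + ln P0) + ln (S s) - U s) = L s); last by lra.
  by apply/max_idPl; apply: L0; case: ps.
apply: (skor hUmono hUrc hU0 _ _ t0).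
  move=> s s0; have [h1 h2] := hb s s0; rewrite /negpart lgi; split.
    by rewrite le_max lexx orbT.
  rewrite ge_max U0 // andbT; rewrite /a in h2; lra.
move=> s ps; have := hpU s ps; rewrite /negpart lgi /a => h.
rewrite (_ : - (- c + ln P0 - ln (S s) - L s) = U s); last by lra.
by apply/max_idPl; apply: U0; case: ps.
Qed.
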